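(* Let $P:\mathcal{X}\times\mathcal{E}\to\mathcal{Y}\times\mathcal{E}$ be an $\varepsilon$-DP RAM program for computing the mean $\frac{1}{|x|}\sum_i x_i$ of datasets $x\in\{0,1\}^*$, such that the runtime distributions satisfy $T_P(x,\mathit{env})\equiv T_P(x',\mathit{env}')$ (identically distributed) for all $x,x'\in\{0,1\}^*$ and all input-compatible $\mathit{env},\mathit{env}'\in\mathcal{E}$. Then for every $0<\beta<1$ there exist a dataset $x$ and a constant $\alpha$ such that $$\Pr\left[\Big|\mathrm{out}(P(x,\mathit{env}))-\frac{1}{|x|}\sum_i x_i\Big|>\alpha\right]>\beta .$$
   Context: Datasets are finite bit strings $x\in\{0,1\}^*$ (records are bits). A program runs on $x$ in an execution environment $\mathit{env}\in\mathcal{E}$ (initial machine state) compatible with $x$; $\mathrm{out}(P(x,\mathit{env}))$ denotes the random output and $T_P(x,\mathit{env})$ the random runtime (number of RAM instructions executed). $\varepsilon$-DP means the output distribution satisfies $\varepsilon$-differential privacy with respect to datasets at insert-delete distance at most $1$. RAM model: memory cells with arbitrary naturals, unit-cost arithmetic, Boolean ops, memory access, conditional jumps, $\texttt{RAND}(n)$ uniform on $\{0,\dots,n\}$. *)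

(* Defs.v *)
From Stdlib Require Import Reals Lra Lia List Arith Bool.
From Coquelicot Require Import Coquelicot.
Import ListNotations.
Open Scope R_scope.
Open Scope bool_scope.

(* All instructions cost one unit of time.  "d" = destination cell,
   "a","b" = source cells (direct addressing); ILoad/IStore give indirect
   memory access.  Boolean operations work on truth values 0 (false) /
   nonzero (true), producing 0/1. *)
Inductive instr : Type :=
| IConst (d c : nat)
| IAdd   (d a b : nat)
| ISub   (d a b : nat)        (* M[d] := M[a] - M[b]  (truncated) *)
| IMul   (d a b : nat)
| IDiv   (d a b : nat)        (* M[d] := M[a] / M[b]  (0 if M[b] = 0) *)
| IMod   (d a b : nat)
| ILt    (d a b : nat)
| IEq    (d a b : nat)
| IAnd   (d a b : nat)
| IOr    (d a b : nat)
| INot   (d a : nat)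
| ILoad  (d a : nat)
| IStore (a s : nat)
| IJz    (a l : nat)
| IRand  (d a : nat).         (* M[d] := uniform on {0,...,M[a]} *)

Definition program := list instr.

Record config := Config { pc : nat; mem : nat -> nat; steps : nat }.

Definition upd (m : nat -> nat) (d v : nat) : nat -> nat :=
  fun j => if Nat.eqb j d then v else m j.

Definition b2n (b : bool) : nat := if b then 1%nat else 0%nat.

Definition wr (c : config) (d v : nat) : config :=
  Config (S (pc c)) (upd (mem c) d v) (S (steps c)).

(* One instruction: finite probability distribution of successors. *)
Definition exec (i : instr) (c : config) : list (R * config) :=
  let m := mem c in
  match i with
  | IConst d k => [(1, wr c d k)]
  | IAdd d a b => [(1, wr c d (m a + m b)%nat)]
  | ISub d a b => [(1, wr c d (m a - m b)%nat)]
  | IMul d a b => [(1, wr c d (m a * m b)%nat)]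
  | IDiv d a b => [(1, wr c d (Nat.div (m a) (m b)))]
  | IMod d a b => [(1, wr c d (Nat.modulo (m a) (m b)))]
  | ILt d a b => [(1, wr c d (b2n (Nat.ltb (m a) (m b))))]
  | IEq d a b => [(1, wr c d (b2n (Nat.eqb (m a) (m b))))]
  | IAnd d a b => [(1, wr c d (b2n (negb (Nat.eqb (m a) 0) && negb (Nat.eqb (m b) 0))))]
  | IOr d a b => [(1, wr c d (b2n (negb (Nat.eqb (m a) 0) || negb (Nat.eqb (m b) 0))))]
  | INot d a => [(1, wr c d (b2n (Nat.eqb (m a) 0)))]
  | ILoad d a => [(1, wr c d (m (m a)))]
  | IStore a s => [(1, Config (S (pc c)) (upd m (m a) (m s)) (S (steps c)))]
  | IJz a l => [(1, Config (if Nat.eqb (m a) 0 then l else S (pc c)) m (S (steps c)))]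
  | IRand d a =>
      map (fun v => (/ INR (S (m a)), wr c d v)) (seq 0 (S (m a)))
  end.

Definition halted (P : program) (c : config) : bool := Nat.leb (length P) (pc c).

Definition step (P : program) (c : config) : list (R * config) :=
  match nth_error P (pc c) with
  | None => [(1, c)]
  | Some i => exec i c
  end.

Definition bind_step (P : program) (d : list (R * config)) : list (R * config) :=
  flat_map (fun wc => map (fun wc' => (fst wc * fst wc', snd wc')) (step P (snd wc))) d.

Fixpoint run (P : program) (k : nat) (d : list (R * config)) : list (R * config) :=
  match k with
  | O => d
  | S k' => run P k' (bind_step P d)
  end.

Definition mass (f : config -> bool) (d : list (R * config)) : R :=
  fold_right (fun wc acc => (if f (snd wc) then fst wc else 0) + acc) 0 d.

Definition init (env : nat -> nat) : list (R * config) := [(1, Config 0 env 0)].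

(* Output convention: cell 0 holds the length L, cells 1..L the output. *)
Definition output (c : config) : list nat :=
  map (fun i => mem c (S i)) (seq 0 (mem c 0)).

(* Input compatibility: cell 0 holds |x|, cells 1..|x| hold the bits of x;
   all other cells are arbitrary. *)
Definition compatible (x : list bool) (env : nat -> nat) : Prop :=
  env 0%nat = length x /\
  forall i, (i < length x)%nat -> env (S i) = b2n (nth i x false).

Definition PrOutBy (P : program) (env : nat -> nat) (k : nat) (E : list nat -> bool) : R :=
  mass (fun c => halted P c && E (output c)) (run P k (init env)).

(* Pr[out(P(x,env)) \in E]  (non-halting runs produce no output) *)
Definition PrOut (P : program) (env : nat -> nat) (E : list nat -> bool) : R :=
  real (Lim_seq (fun k => PrOutBy P env k E)).

Definition PrTime (P : program) (env : nat -> nat) (t : nat) : R :=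
  mass (fun c => halted P c && Nat.eqb (steps c) t) (run P t (init env)).

Definition insdel1 (x x' : list bool) : Prop :=
  exists (a b : list bool) (c : bool),
    (x = a ++ b /\ x' = a ++ c :: b) \/ (x' = a ++ b /\ x = a ++ c :: b).

Definition dist_le1 (x x' : list bool) : Prop := x = x' \/ insdel1 x x'.

Definition eps_DP (eps : R) (P : program) : Prop :=
  forall x x' env env', dist_le1 x x' -> compatible x env -> compatible x' env' ->
    forall E : list nat -> bool, PrOut P env E <= exp eps * PrOut P env' E.

Definition mean (x : list bool) : R :=
  fold_right (fun b acc => INR (b2n b) + acc) 0 x / INR (length x).

Definition Rleb (a b : R) : bool := if Rle_dec a b then true else false.

(* Main.v *)
Require Import Defs.
From Stdlib Require Import Reals Lra Lia List Arith Bool Classical.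
From Coquelicot Require Import Coquelicot.
Import ListNotations.
Open Scope R_scope.

Definition indb (b : bool) : R := if b then 1 else 0.
Lemma indb_bounds b : 0 <= indb b <= 1.
Proof. destruct b; simpl; lra. Qed.

Definition massn (G : config -> R) (d : list (R * config)%type) : R :=
  fold_right (fun wc acc => fst wc * G (snd wc) + acc) 0 d.

Definition nonnegL (d : list (R * config)%type) := List.Forall (fun wc => 0 <= fst wc) d.

Lemma mass_massn f d : mass f d = massn (fun c => indb (f c)) d.
Proof. induction d as [|[w c] d IH]; simpl; auto. rewrite IH. unfold indb; destruct (f c); ring. Qed.

Lemma massn_app G l1 l2 : massn G (l1 ++ l2) = massn G l1 + massn G l2.
Proof. induction l1 as [|[w c] l IH]; simpl; [ring|rewrite IH; ring]. Qed.

Lemma massn_nonneg G d : nonnegL d -> (forall c, 0 <= G c) -> 0 <= massn G d.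
Proof. intros H HG; induction H as [|[w c] d Hw _ IH]; simpl in *; try lra.
  specialize (HG c). nra. Qed.

Lemma massn_le_in G G' d : nonnegL d ->
  (forall wc, In wc d -> G (snd wc) <= G' (snd wc)) -> massn G d <= massn G' d.
Proof. intros H; induction H as [|[w c] d Hw _ IH]; simpl in *; intros HG; try lra.
  assert (G c <= G' c) by (apply (HG (w,c)); auto).
  assert (massn G d <= massn G' d) by (apply IH; auto). nra. Qed.

Lemma massn_le G G' d : nonnegL d -> (forall c, G c <= G' c) -> massn G d <= massn G' d.
Proof. intros; apply massn_le_in; auto. Qed.

Lemma massn_plus G G' d : massn (fun c => G c + G' c) d = massn G d + massn G' d.
Proof. induction d as [|[w c] d IH]; simpl; [ring|rewrite IH; ring]. Qed.

Lemma massn_const0 d : massn (fun _ => 0) d = 0.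
Proof. induction d as [|[w c] d IH]; simpl; [ring|rewrite IH; ring]. Qed.

Lemma massn_scal k G d : massn (fun c => k * G c) d = k * massn G d.
Proof. induction d as [|[w c] d IH]; simpl; [ring|rewrite IH; ring]. Qed.

Definition sumR (L : list nat) (F : nat -> R) : R := fold_right (fun i acc => F i + acc) 0 L.

Lemma sumR_app L1 L2 F : sumR (L1 ++ L2) F = sumR L1 F + sumR L2 F.
Proof. induction L1; simpl; [ring| rewrite IHL1; ring]. Qed.

Lemma sumR_nonneg L F : (forall i, 0 <= F i) -> 0 <= sumR L F.
Proof. intros H; induction L; simpl; [lra| specialize (H a); lra]. Qed.

Lemma sumR_le L F F' : (forall i, In i L -> F i <= F' i) -> sumR L F <= sumR L F'.
Proof. induction L; simpl; intros H; [lra|].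
  assert (F a <= F' a) by auto. assert (sumR L F <= sumR L F') by auto. lra. Qed.

Lemma sumR_plus L F F' : sumR L (fun i => F i + F' i) = sumR L F + sumR L F'.
Proof. induction L; simpl; [ring| rewrite IHL; ring]. Qed.

Lemma sumR_scal L k F : sumR L (fun i => k * F i) = k * sumR L F.
Proof. induction L; simpl; [ring| rewrite IHL; ring]. Qed.

Lemma sumR_const L k : sumR L (fun _ => k) = INR (length L) * k.
Proof. induction L; simpl length; rewrite ?S_INR; simpl; [ring| rewrite IHL; ring]. Qed.

Lemma sumR_term L F x : In x L -> (forall i, 0 <= F i) -> F x <= sumR L F.
Proof. intros Hx HF; induction L; simpl in *; [tauto|]. destruct Hx as [->|Hx].
  - pose proof (sumR_nonneg L F HF); lra.
  - specialize (IHL Hx); specialize (HF a); lra. Qed.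

Lemma massn_sumR L F d : massn (fun c => sumR L (fun i => F i c)) d = sumR L (fun i => massn (F i) d).
Proof. induction L; simpl.
  - apply massn_const0.
  - rewrite massn_plus, IHL; auto. Qed.

Lemma sumR_ind_eq_le1 L x : NoDup L -> sumR L (fun i => indb (Nat.eqb x i)) <= 1.
Proof. intros H; induction H; simpl; [lra|].
  destruct (Nat.eqb_spec x x0).
  - subst. assert (sumR l (fun i => indb (Nat.eqb x0 i)) = 0).
    { clear IHNoDup H0. induction l; simpl; auto. destruct (Nat.eqb_spec x0 a).
      subst; simpl in H; tauto. simpl in *. rewrite IHl; [lra|tauto]. }
    simpl; lra.
  - simpl; lra. Qed.

Lemma sumR_ind_eq_1 L x : NoDup L -> In x L -> sumR L (fun i => indb (Nat.eqb x i)) = 1.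
Proof. intros H; induction H; simpl; [tauto|]. intros Hin.
  destruct (Nat.eqb_spec x x0).
  - subst. assert (sumR l (fun i => indb (Nat.eqb x0 i)) = 0).
    { clear IHNoDup H0 Hin. induction l; simpl; auto. destruct (Nat.eqb_spec x0 a).
      subst; simpl in H; tauto. simpl in *. rewrite IHl; [lra|tauto]. }
    simpl; lra.
  - destruct Hin as [->|Hin]; [tauto|]. simpl; rewrite IHNoDup; auto; lra. Qed.

Lemma sumR_excl L (F : nat -> bool) : NoDup L ->
  (forall i j, In i L -> In j L -> i <> j -> F i = true -> F j = false) ->
  sumR L (fun i => indb (F i)) <= 1.
Proof. intros H; induction H; simpl; intros Hex; [lra|].
  destruct (F x) eqn:Fx.
  - assert (sumR l (fun i => indb (F i)) = 0).
    { assert (forall j, In j l -> F j = false).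
      { intros j Hj. apply (Hex x j); simpl; auto. intro; subst; tauto. }
      clear IHNoDup Hex H0. induction l; simpl; auto. rewrite H1; simpl; auto.
      rewrite IHl; simpl in *; auto; lra. }
    simpl; lra.
  - simpl. assert (sumR l (fun i => indb (F i)) <= 1).
    { apply IHNoDup; intros; apply (Hex i j); simpl; auto. } lra. Qed.

Lemma bind_app P l1 l2 : bind_step P (l1 ++ l2) = bind_step P l1 ++ bind_step P l2.
Proof. unfold bind_step; apply flat_map_app. Qed.

Lemma run_app P k l1 l2 : run P k (l1 ++ l2) = run P k l1 ++ run P k l2.
Proof. revert l1 l2; induction k; intros; simpl; auto. rewrite bind_app; auto. Qed.

Lemma run_S P k d : run P (S k) d = bind_step P (run P k d).
Proof. revert d; induction k; intros; simpl; auto. rewrite <- IHk; reflexivity. Qed.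

Lemma massn_map_scale G w l :
  massn G (map (fun wc' => (w * fst wc', snd wc')) l) = w * massn G l.
Proof. induction l as [|[a c] l IH]; simpl; [ring| rewrite IH; ring]. Qed.

Lemma massn_bind P G d : massn G (bind_step P d) = massn (fun c => massn G (step P c)) d.
Proof. induction d as [|[w c] d IH]; simpl; auto.
  unfold bind_step in *; simpl. rewrite massn_app, massn_map_scale, IH; reflexivity. Qed.

Lemma massn_map_seq G w f L :
  massn G (map (fun v => (w, f v)) L) = sumR L (fun v => w * G (f v)).
Proof. induction L; simpl; auto. rewrite IHL; auto. Qed.

Lemma nonneg_map_seq w (f : nat -> config) L : 0 <= w -> nonnegL (map (fun v => (w, f v)) L).
Proof. intros Hw; induction L; simpl; constructor; auto. Qed.

Lemma step_nonneg P c : nonnegL (step P c).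
Proof. unfold step. destruct (nth_error P (pc c)) as [i|].
  2:{ repeat constructor; simpl; lra. }
  destruct i; try (simpl; repeat constructor; simpl; lra).
  unfold exec. apply nonneg_map_seq. left. apply Rinv_0_lt_compat. apply lt_0_INR; lia. Qed.

Lemma step_mass1 P c : massn (fun _ => 1) (step P c) = 1.
Proof. unfold step. destruct (nth_error P (pc c)) as [i|].
  2:{ simpl; ring. }
  destruct i; try (simpl; ring).
  unfold exec. rewrite massn_map_seq, sumR_const, length_seq. field. apply not_0_INR; lia. Qed.

Lemma nonneg_app l1 l2 : nonnegL l1 -> nonnegL l2 -> nonnegL (l1 ++ l2).
Proof. intros; apply Forall_app; auto. Qed.

Lemma nonneg_bind P d : nonnegL d -> nonnegL (bind_step P d).
Proof. intros H; induction H as [|[w c] d Hw _ IH]; simpl; [constructor|].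
  unfold bind_step in *; simpl. apply nonneg_app; auto.
  pose proof (step_nonneg P c) as Hs. induction Hs; simpl; constructor; auto.
  simpl in *. nra. Qed.

Lemma nonneg_run P k d : nonnegL d -> nonnegL (run P k d).
Proof. revert d; induction k; intros; simpl; auto. apply IHk, nonneg_bind; auto. Qed.

Lemma nonneg_init e : nonnegL (init e).
Proof. repeat constructor; simpl; lra. Qed.

Lemma massn_total P k d : massn (fun _ => 1) (run P k d) = massn (fun _ => 1) d.
Proof. revert d; induction k; intros; simpl; auto. rewrite IHk, massn_bind.
  induction d as [|[w c] d IH]; simpl; auto. rewrite step_mass1, IH; auto. Qed.

Lemma halted_step P c : halted P c = true -> step P c = [(1, c)].
Proof. unfold halted, step; intros H. apply Nat.leb_le in H.
  rewrite (proj2 (nth_error_None P (pc c)) H); auto. Qed.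

Lemma in_map_seq_inv {A} (w : R) (f : nat -> A) L x : In x (map (fun v => (w, f v)) L) -> exists v, x = (w, f v).
Proof. intros H; apply in_map_iff in H; destruct H as [v [<- _]]; eauto. Qed.

Lemma step_steps P c : halted P c = false -> forall x, In x (step P c) -> steps (snd x) = S (steps c).
Proof. unfold halted, step; intros H x Hx. apply Nat.leb_gt in H.
  destruct (nth_error P (pc c)) as [i|] eqn:E.
  2:{ apply nth_error_None in E; lia. }
  destruct i; try (simpl in Hx; destruct Hx as [<-|[]]; reflexivity).
  unfold exec in Hx. apply in_map_seq_inv in Hx; destruct Hx as [v ->]; reflexivity. Qed.

Lemma Forall_bind P (Q : (R * config)%type -> Prop) d :
  (forall wc, In wc d -> forall x, In x (step P (snd wc)) -> Q (fst wc * fst x, snd x)) ->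
  List.Forall Q (bind_step P d).
Proof. intros H; apply Forall_forall; intros y Hy. unfold bind_step in Hy.
  apply in_flat_map in Hy; destruct Hy as [wc [Hwc Hy]].
  apply in_map_iff in Hy; destruct Hy as [x [<- Hx]]. apply H; auto. Qed.

Lemma run_pres P (Q : config -> Prop) k d :
  (forall c x, Q c -> In x (step P c) -> Q (snd x)) ->
  List.Forall (fun wc => Q (snd wc)) d -> List.Forall (fun wc => Q (snd wc)) (run P k d).
Proof. intros HQ; revert d; induction k; intros d Hd; simpl; auto. apply IHk.
  apply Forall_bind. intros wc Hwc x Hx. simpl. rewrite Forall_forall in Hd.
  apply (HQ (snd wc)); auto. Qed.

Lemma massn_halted_mono P h d : nonnegL d -> (forall c, 0 <= h c) ->
  (forall c, halted P c = false -> h c = 0) ->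
  massn h d <= massn h (bind_step P d).
Proof. intros Hd Hh Hh0. rewrite massn_bind. apply massn_le; auto.
  intros c. destruct (halted P c) eqn:E.
  - rewrite halted_step; auto; simpl; lra.
  - rewrite Hh0; auto. apply massn_nonneg; auto. apply step_nonneg. Qed.

Lemma massn_halted_mono_run P h d k : nonnegL d -> (forall c, 0 <= h c) ->
  (forall c, halted P c = false -> h c = 0) ->
  massn h (run P k d) <= massn h (run P (S k) d).
Proof. intros. rewrite run_S. apply massn_halted_mono; auto. apply nonneg_run; auto. Qed.

Lemma massn_halted_mono_le P h d k k' : nonnegL d -> (forall c, 0 <= h c) ->
  (forall c, halted P c = false -> h c = 0) -> (k <= k')%nat ->
  massn h (run P k d) <= massn h (run P k' d).
Proof. intros H1 H2 H3 Hk. induction Hk; [lra|].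
  pose proof (massn_halted_mono_run P h d m H1 H2 H3); lra. Qed.

Definition Hmass P e k := massn (fun c => indb (halted P c)) (run P k (init e)).
Definition ht P t c := indb (halted P c && Nat.eqb (steps c) t).

Lemma massn_eq_in G G' d : (forall wc, In wc d -> G (snd wc) = G' (snd wc)) -> massn G d = massn G' d.
Proof. induction d as [|[w c] d IH]; simpl; intros HG; auto.
  pose proof (HG (w,c) (or_introl eq_refl)) as E; simpl in E. rewrite E, IH; auto. Qed.

Lemma massn_zero_in G d : (forall wc, In wc d -> G (snd wc) = 0) -> massn G d = 0.
Proof. intros; rewrite (massn_eq_in G (fun _ => 0)); auto. apply massn_const0. Qed.

Lemma run_steps_inv P e k : List.Forall (fun wc => (steps (snd wc) <= k)%nat /\
   (halted P (snd wc) = false -> steps (snd wc) = k)) (run P k (init e)).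
Proof. induction k.
  - simpl. repeat constructor.
  - rewrite run_S. apply Forall_bind. intros wc Hwc x Hx. simpl.
    rewrite Forall_forall in IHk. destruct (IHk wc Hwc) as [H1 H2].
    destruct (halted P (snd wc)) eqn:Eh.
    + rewrite halted_step in Hx; auto. destruct Hx as [<-|[]]; simpl. split; [lia|].
      rewrite Eh; discriminate.
    + rewrite (step_steps P (snd wc) Eh x Hx). split; intros; lia. Qed.

Lemma ht_stable P e t s : (t <= s)%nat ->
  massn (ht P t) (bind_step P (run P s (init e))) = massn (ht P t) (run P s (init e)).
Proof. intros Hts. rewrite massn_bind. apply massn_eq_in. intros wc Hwc.
  pose proof (run_steps_inv P e s) as Hi. rewrite Forall_forall in Hi.
  destruct (Hi wc Hwc) as [H1 H2].
  destruct (halted P (snd wc)) eqn:Eh.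
  - rewrite halted_step; auto. simpl; ring.
  - unfold ht at 2. rewrite Eh. simpl. apply massn_zero_in. intros x Hx.
    unfold ht. rewrite (step_steps P _ Eh x Hx), H2; auto.
    destruct (Nat.eqb_spec (S s) t); [lia|]. rewrite andb_false_r; reflexivity. Qed.

Lemma ht_run P e t k : (t <= k)%nat ->
  massn (ht P t) (run P k (init e)) = PrTime P e t.
Proof. intros Htk. unfold PrTime. rewrite mass_massn. fold (ht P t).
  induction Htk; auto. rewrite run_S, ht_stable; auto. Qed.

Lemma sumR_eq_in L F F' : (forall i, In i L -> F i = F' i) -> sumR L F = sumR L F'.
Proof. induction L; simpl; intros HF; auto. rewrite HF, IHL; auto. Qed.

Lemma H_sum P e k : Hmass P e k = sumR (seq 0 (S k)) (fun t => PrTime P e t).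
Proof. unfold Hmass. rewrite (massn_eq_in _ (fun c => sumR (seq 0 (S k)) (fun t => ht P t c))).
  - rewrite massn_sumR. apply sumR_eq_in. intros t Ht. apply in_seq in Ht.
    apply ht_run; lia.
  - intros wc Hwc. pose proof (run_steps_inv P e k) as Hi. rewrite Forall_forall in Hi.
    destruct (Hi wc Hwc) as [H1 H2]. unfold ht.
    destruct (halted P (snd wc)); cbn [andb].
    + symmetry. apply sumR_ind_eq_1. apply seq_NoDup. apply in_seq; lia.
    + symmetry. rewrite (sumR_eq_in _ _ (fun _ => 0)); [|auto]. rewrite sumR_const; unfold indb; ring. Qed.

Lemma H_const P e e' x x' k :
  (forall x x' env env' t, compatible x env -> compatible x' env' ->
     PrTime P env t = PrTime P env' t) -> compatible x e -> compatible x' e' ->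
  Hmass P e k = Hmass P e' k.
Proof. intros HT He He'. rewrite !H_sum. apply sumR_eq_in; intros. eapply HT; eauto. Qed.

Definition GE P (E : list nat -> bool) c := indb (halted P c && E (output c)).

Lemma PrOutBy_massn P e k E : PrOutBy P e k E = massn (GE P E) (run P k (init e)).
Proof. unfold PrOutBy. apply mass_massn. Qed.

Lemma GE_bounds P E c : 0 <= GE P E c <= 1.
Proof. apply indb_bounds. Qed.

Lemma massn_run_le1 P k e G : (forall c, 0 <= G c <= 1) -> 0 <= massn G (run P k (init e)) <= 1.
Proof. intros HG. split.
  - apply massn_nonneg; [apply nonneg_run, nonneg_init|intros c; apply HG].
  - apply Rle_trans with (massn (fun _ => 1) (run P k (init e))).
    + apply massn_le; [apply nonneg_run, nonneg_init|intros c; apply HG].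
    + rewrite massn_total. simpl; lra. Qed.

Lemma PrOutBy_bounds P e k E : 0 <= PrOutBy P e k E <= 1.
Proof. rewrite PrOutBy_massn. apply massn_run_le1. apply GE_bounds. Qed.

Lemma GE_halted P E c : halted P c = false -> GE P E c = 0.
Proof. unfold GE; intros ->; reflexivity. Qed.

Lemma PrOutBy_mono P e k E : PrOutBy P e k E <= PrOutBy P e (S k) E.
Proof. rewrite !PrOutBy_massn. apply massn_halted_mono_run.
  apply nonneg_init. intros; apply GE_bounds. apply GE_halted. Qed.

Lemma PrOutBy_mono_le P e k k' E : (k <= k')%nat -> PrOutBy P e k E <= PrOutBy P e k' E.
Proof. intros Hk; induction Hk; [lra|]. pose proof (PrOutBy_mono P e m E); lra. Qed.

Lemma H_mono P e k : Hmass P e k <= Hmass P e (S k).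
Proof. unfold Hmass. apply massn_halted_mono_run. apply nonneg_init.
  intros; apply indb_bounds. intros c ->; reflexivity. Qed.

Lemma H_bounds P e k : 0 <= Hmass P e k <= 1.
Proof. unfold Hmass. apply massn_run_le1. intros; apply indb_bounds. Qed.

Lemma PrOutBy_incr P e E T k : (T <= k)%nat ->
  PrOutBy P e k E - PrOutBy P e T E <= Hmass P e k - Hmass P e T.
Proof. intros HTk. rewrite !PrOutBy_massn. unfold Hmass.
  set (G2 := fun c => indb (halted P c && negb (E (output c)))).
  assert (Hs : forall k, massn (fun c => indb (halted P c)) (run P k (init e)) =
     massn (GE P E) (run P k (init e)) + massn G2 (run P k (init e))).
  { intros k0. rewrite <- massn_plus. apply massn_eq_in. intros wc _. unfold GE, G2.
    destruct (halted P (snd wc)), (E (output (snd wc))); simpl; ring. }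
  rewrite !Hs.
  assert (massn G2 (run P T (init e)) <= massn G2 (run P k (init e))).
  { apply massn_halted_mono_le; auto. apply nonneg_init. intros; apply indb_bounds.
    intros c Hc; unfold G2; rewrite Hc; reflexivity. }
  lra. Qed.

Lemma PrOut_ex P e E : ex_finite_lim_seq (fun k => PrOutBy P e k E).
Proof. apply (ex_finite_lim_seq_incr _ 1). intros n; apply PrOutBy_mono. intros; apply PrOutBy_bounds. Qed.

Lemma PrOut_lim P e E : is_lim_seq (fun k => PrOutBy P e k E) (PrOut P e E).
Proof. pose proof (PrOut_ex P e E) as [l Hl]. unfold PrOut.
  rewrite (is_lim_seq_unique _ _ Hl). simpl. auto. Qed.

Lemma PrOutBy_le_PrOut P e k E : PrOutBy P e k E <= PrOut P e E.
Proof. apply (is_lim_seq_incr_compare (fun k => PrOutBy P e k E)).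
  apply PrOut_lim. intros n; apply PrOutBy_mono. Qed.

Lemma PrOut_le P e E B : (forall k, PrOutBy P e k E <= B) -> PrOut P e E <= B.
Proof. intros HB. assert (Hr : Rbar_le (PrOut P e E) B).
  { apply (is_lim_seq_le (fun k => PrOutBy P e k E) (fun _ => B)); auto.
    apply PrOut_lim. apply is_lim_seq_const. }
  simpl in *; auto. Qed.

Lemma PrOut_nonneg P e E : 0 <= PrOut P e E.
Proof. pose proof (PrOutBy_le_PrOut P e 0 E). pose proof (PrOutBy_bounds P e 0 E). lra. Qed.

Lemma exists_T P e g : 0 < g -> exists T, forall k, Hmass P e k <= Hmass P e T + g.
Proof. intros Hg.
  assert (Hex : ex_finite_lim_seq (fun k => Hmass P e k)).
  { apply (ex_finite_lim_seq_incr _ 1). apply H_mono. intros; apply H_bounds. }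
  destruct Hex as [l Hl].
  pose proof (is_lim_seq_incr_compare _ _ Hl (H_mono P e)) as Hle.
  apply is_lim_seq_spec in Hl. destruct (Hl (mkposreal g Hg)) as [N HN].
  exists N. intros k. specialize (HN N (le_n N)). simpl in HN.
  specialize (Hle k). apply Rabs_def2 in HN. lra. Qed.

Lemma tail_bound P e E T g : (forall k, Hmass P e k <= Hmass P e T + g) ->
  PrOut P e E <= PrOutBy P e T E + g.
Proof. intros Hk. apply PrOut_le. intros k. destruct (le_lt_dec T k).
  - pose proof (PrOutBy_incr P e E T k l). specialize (Hk k). lra.
  - pose proof (PrOutBy_mono_le P e k T E ltac:(lia)).
    assert (0 <= g). { specialize (Hk T); lra. } lra. Qed.

Definition rdi (i : instr) (m : nat -> nat) : list nat :=
  match i with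
  | IConst _ _ => []
  | IAdd _ a b | ISub _ a b | IMul _ a b | IDiv _ a b | IMod _ a b
  | ILt _ a b | IEq _ a b | IAnd _ a b | IOr _ a b => [a; b]
  | INot _ a => [a]
  | ILoad _ a => [a; m a]
  | IStore a s => [a; s]
  | IJz a _ => [a]
  | IRand _ a => [a]
  end.

Definition rd P c : list nat :=
  match nth_error P (pc c) with None => [] | Some i => rdi i (mem c) end.

Lemma rd_len P c : (length (rd P c) <= 2)%nat.
Proof. unfold rd; destruct (nth_error P (pc c)) as [i|]; simpl; [destruct i; simpl|]; lia. Qed.

Definition Rel (s : nat -> bool) (c c' : config) : Prop :=
  pc c = pc c' /\ steps c = steps c' /\
  forall j, mem c j = mem c' j \/ (s j = true /\ mem c j = 0%nat /\ mem c' j = 1%nat).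

Definition RW s (p p' : (R * config)%type) := fst p = fst p' /\ Rel s (snd p) (snd p').

Lemma Rel_mem s c c' j : Rel s c c' -> s j = false -> mem c j = mem c' j.
Proof. intros [_ [_ H]] Hs. destruct (H j) as [|[E _]]; auto. congruence. Qed.

Lemma Rel_upd s c c' d v : Rel s c c' -> forall j, upd (mem c) d v j = upd (mem c') d v j \/
  (s j = true /\ upd (mem c) d v j = 0%nat /\ upd (mem c') d v j = 1%nat).
Proof. intros [_ [_ H]] j. unfold upd. destruct (Nat.eqb j d); auto. Qed.

Lemma Rel_wr s c c' d v : Rel s c c' -> Rel s (wr c d v) (wr c' d v).
Proof. intros HR. pose proof HR as [Hp [Hs _]]. unfold wr; split; [simpl; congruence|split; [simpl; congruence|]].
  apply Rel_upd; auto. Qed.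

Lemma existsb_false2 (s : nat -> bool) a b : existsb s [a; b] = false -> s a = false /\ s b = false.
Proof. simpl. destruct (s a), (s b); simpl; auto; discriminate. Qed.
Lemma existsb_false1 (s : nat -> bool) a : existsb s [a] = false -> s a = false.
Proof. simpl. destruct (s a); simpl; auto; discriminate. Qed.

Lemma step_rel P s c c' : Rel s c c' -> existsb s (rd P c) = false ->
  Forall2 (RW s) (step P c) (step P c').
Proof. intros HR Ht. pose proof HR as [Hp [Hst Hm]]. unfold rd in Ht. unfold step. rewrite <- Hp.
  destruct (nth_error P (pc c)) as [i|].
  2:{ constructor; [split; [reflexivity| exact HR]|constructor]. }
  destruct i; cbn [rdi] in Ht;
  try (apply existsb_false2 in Ht as [Ha Hb]); try (apply existsb_false1 in Ht as Ha).
  all: try (cbn [exec]; rewrite ?(Rel_mem s c c' a HR Ha), ?(Rel_mem s c c' b HR Hb);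
            constructor; [split; [reflexivity| apply Rel_wr; auto]|constructor]).
  - cbn [exec]. pose proof (Rel_mem s c c' a HR Ha) as Ea.
    rewrite <- Ea. rewrite (Rel_mem s c c' (mem c a) HR Hb).
    constructor; [split; [reflexivity| apply Rel_wr; auto]|constructor].
  - cbn [exec]. rewrite (Rel_mem s c c' a HR Ha), (Rel_mem s c c' s0 HR Hb).
    constructor; [|constructor]. split; [reflexivity|].
    split; [simpl; congruence|split; [simpl; congruence|]].
    simpl. rewrite <- (Rel_mem s c c' a HR Ha), <- (Rel_mem s c c' s0 HR Hb).
    apply Rel_upd; auto.
  - cbn [exec]. rewrite (Rel_mem s c c' a HR Ha).
    constructor; [|constructor]. split; [reflexivity|].
    split; [simpl; rewrite Hp; reflexivity|split; [simpl; congruence|]]. simpl. auto.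
  - unfold exec. rewrite (Rel_mem s c c' a HR Ha).
    induction (seq 0 (S (mem c' a))); simpl; constructor; auto.
    split; [reflexivity| apply Rel_wr; auto]. Qed.

Fixpoint sumK P (G : config -> R) k d : R :=
  match k with O => 0 | S k' => massn G d + sumK P G k' (bind_step P d) end.

Lemma sumK_app P G k l1 l2 : sumK P G k (l1 ++ l2) = sumK P G k l1 + sumK P G k l2.
Proof. revert l1 l2; induction k; intros; simpl; [ring|]. rewrite bind_app, massn_app, IHk; ring. Qed.

Lemma sumK_nonneg P G k d : nonnegL d -> (forall c, 0 <= G c) -> 0 <= sumK P G k d.
Proof. revert d; induction k; intros d Hd HG; simpl; [lra|].
  pose proof (massn_nonneg G d Hd HG). pose proof (IHk (bind_step P d) (nonneg_bind P d Hd) HG). lra. Qed.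

Lemma run_nil P k : run P k [] = [].
Proof. induction k; simpl; auto. Qed.

Lemma Forall2_map_scale s w l l' : Forall2 (RW s) l l' ->
  Forall2 (RW s) (map (fun wc' => (w * fst wc', snd wc')) l) (map (fun wc' => (w * fst wc', snd wc')) l').
Proof. induction 1; simpl; constructor; auto. destruct H as [H1 H2]. split; simpl; auto. rewrite H1; auto. Qed.

Lemma Forall2_nonneg s d d' : Forall2 (RW s) d d' -> nonnegL d -> nonnegL d'.
Proof. induction 1; intros Hn; [constructor|]. inversion Hn; subst.
  constructor; [destruct H as [H1 _]; rewrite <- H1; auto | apply IHForall2; auto]. Qed.

Lemma coupling P s (F G M : config -> R) :
  (forall c, 0 <= F c <= 1) -> (forall c, 0 <= G c) -> (forall c, 0 <= M c) ->
  (forall c c', Rel s c c' -> F c' <= G c + M c') ->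
  forall k d d', Forall2 (RW s) d d' -> nonnegL d ->
  massn F (run P k d') <= massn G (run P k d) + sumK P (fun c => indb (existsb s (rd P c))) k d
                          + massn M (run P k d').
Proof. intros hF hG hM hB. induction k; intros d d' HR Hn.
  - simpl. induction HR as [|[w c] [w' c'] d d' [Hw Hr] HR IH]; simpl; [lra|].
    simpl in Hw, Hr; subst w'. inversion Hn; subst. simpl in H1. specialize (IH H2).
    specialize (hB c c' Hr). nra.
  - induction HR as [|[w c] [w' c'] d d' [Hw Hr] HR IH].
    + simpl. unfold bind_step; simpl. rewrite ?run_nil. simpl. assert (0 <= sumK P (fun c => indb (existsb s (rd P c))) k []) by (apply sumK_nonneg; [constructor|intros; apply indb_bounds]). lra.
    + simpl in Hw, Hr; subst w'. inversion Hn; subst. simpl in H1. specialize (IH H2).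
      change ((w, c) :: d) with ([(w,c)] ++ d). change ((w, c') :: d') with ([(w,c')] ++ d').
      rewrite !run_app, !massn_app, sumK_app.
      enough (massn F (run P (S k) [(w, c')]) <= massn G (run P (S k) [(w, c)]) +
        sumK P (fun c0 => indb (existsb s (rd P c0))) (S k) [(w, c)] + massn M (run P (S k) [(w, c')])) by lra.
      cbn [run sumK].
      destruct (existsb s (rd P c)) eqn:Et.
      * assert (massn F (run P k (bind_step P [(w, c')])) <= w).
        { apply Rle_trans with (massn (fun _ => 1) (run P k (bind_step P [(w, c')]))).
          - apply massn_le. apply nonneg_run, nonneg_bind. (constructor; [exact H1|constructor]). intros; apply hF.
          - rewrite massn_total, massn_bind. simpl. rewrite step_mass1. lra. }
        assert (0 <= massn G (run P k (bind_step P [(w, c)]))).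
        { apply massn_nonneg; auto. apply nonneg_run, nonneg_bind. (constructor; [exact H1|constructor]). }
        assert (0 <= massn M (run P k (bind_step P [(w, c')]))).
        { apply massn_nonneg; auto. apply nonneg_run, nonneg_bind. (constructor; [exact H1|constructor]). }
        assert (0 <= sumK P (fun c0 => indb (existsb s (rd P c0))) k (bind_step P [(w, c)])).
        { apply sumK_nonneg; [|intros; apply indb_bounds]. apply nonneg_bind. (constructor; [exact H1|constructor]). }
        assert (Hm1 : massn (fun c0 => indb (existsb s (rd P c0))) [(w,c)] = w) by (simpl; rewrite Et; simpl; ring). lra.
      * assert (Hb : Forall2 (RW s) (bind_step P [(w, c)]) (bind_step P [(w, c')])).
        { unfold bind_step; simpl. rewrite !app_nil_r. apply Forall2_map_scale. apply step_rel; auto. }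
        assert (Hnb : nonnegL (bind_step P [(w,c)])) by (apply nonneg_bind; constructor; [exact H1|constructor]).
        pose proof (IHk _ _ Hb Hnb).
        assert (Hm1 : massn (fun c0 => indb (existsb s (rd P c0))) [(w,c)] = 0) by (simpl; rewrite Et; simpl; ring). lra. Qed.

Definition sL (L : list nat) (j : nat) : bool := existsb (Nat.eqb j) L.

Lemma sL_In L j : sL L j = true <-> In j L.
Proof. unfold sL. rewrite existsb_exists. split.
  - intros [x [Hx E]]. apply Nat.eqb_eq in E; subst; auto.
  - intros H; exists j; split; auto. apply Nat.eqb_refl. Qed.

Lemma indb_or a b : indb (a || b) <= indb a + indb b.
Proof. destruct a, b; simpl; lra. Qed.

Lemma touch_split L r : indb (existsb (sL L) r) <= sumR L (fun i => indb (existsb (Nat.eqb i) r)).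
Proof. destruct (existsb (sL L) r) eqn:E.
  - apply existsb_exists in E. destruct E as [y [Hy Hs]]. apply sL_In in Hs.
    apply Rle_trans with (indb (existsb (Nat.eqb y) r)).
    + assert (existsb (Nat.eqb y) r = true). { apply existsb_exists. exists y; split; auto. apply Nat.eqb_refl. }
      rewrite H; simpl; lra.
    + apply (sumR_term L (fun i => indb (existsb (Nat.eqb i) r))); auto. intros; apply indb_bounds.
  - simpl. apply sumR_nonneg. intros; apply indb_bounds. Qed.

Lemma touch_count L r : NoDup L -> sumR L (fun i => indb (existsb (Nat.eqb i) r)) <= INR (length r).
Proof. intros HL. induction r as [|x r IH].
  - cbn [existsb indb length]. rewrite sumR_const; simpl; lra.
  - cbn [existsb length]. rewrite S_INR.
    apply Rle_trans with (sumR L (fun i => indb (Nat.eqb i x) + indb (existsb (Nat.eqb i) r))).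
    + apply sumR_le; intros; apply indb_or.
    + rewrite sumR_plus.
      assert (sumR L (fun i => indb (Nat.eqb i x)) <= 1).
      { rewrite (sumR_eq_in _ _ (fun i => indb (Nat.eqb x i))). apply sumR_ind_eq_le1; auto.
        intros; rewrite Nat.eqb_sym; auto. }
      lra. Qed.

Lemma sumK_sumR P L F k d : sumK P (fun c => sumR L (fun i => F i c)) k d = sumR L (fun i => sumK P (F i) k d).
Proof. revert d; induction k; intros d; simpl.
  - rewrite sumR_const; ring.
  - rewrite massn_sumR, IHk, <- sumR_plus. reflexivity. Qed.

Lemma sumK_le P G G' k d : nonnegL d -> (forall c, G c <= G' c) -> sumK P G k d <= sumK P G' k d.
Proof. revert d; induction k; intros d Hd HG; simpl; [lra|].
  pose proof (massn_le G G' d Hd HG). pose proof (IHk (bind_step P d) (nonneg_bind P d Hd) HG). lra. Qed.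

Lemma sumK_const P b k d : sumK P (fun _ => b) k d = INR k * b * massn (fun _ => 1) d.
Proof. revert d; induction k; intros d; simpl; [ring|].
  rewrite IHk, massn_bind. rewrite (massn_eq_in (fun c => massn (fun _ => 1) (step P c)) (fun _ => 1)).
  2:{ intros; apply step_mass1. }
  rewrite (massn_eq_in (fun _ => b) (fun c => b * 1)) by (intros; ring). rewrite massn_scal.
  destruct k; simpl; ring. Qed.

Lemma touch_total P n k d : nonnegL d ->
  sumR (seq 1 n) (fun i => sumK P (fun c => indb (existsb (Nat.eqb i) (rd P c))) k d)
  <= 2 * INR k * massn (fun _ => 1) d.
Proof. intros Hd. rewrite <- sumK_sumR.
  apply Rle_trans with (sumK P (fun _ => 2) k d).
  - apply sumK_le; auto. intros c. apply Rle_trans with (INR (length (rd P c))).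
    + apply touch_count, seq_NoDup.
    + pose proof (rd_len P c). apply le_INR in H. simpl in H. lra.
  - rewrite sumK_const. lra. Qed.

Definition cntR n (m : nat -> nat) := sumR (seq 1 n) (fun i => indb (negb (m i =? 0))).

Lemma sumR_upd_notin L m d v : ~ In d L ->
  sumR L (fun i => indb (negb (upd m d v i =? 0))) = sumR L (fun i => indb (negb (m i =? 0))).
Proof. intros Hd; apply sumR_eq_in. intros i Hi. unfold upd.
  destruct (Nat.eqb_spec i d); [subst; tauto|auto]. Qed.

Lemma sumR_upd L m d v : NoDup L ->
  sumR L (fun i => indb (negb (upd m d v i =? 0))) <= sumR L (fun i => indb (negb (m i =? 0))) + 1.
Proof. intros HL; induction HL; simpl; [lra|].
  destruct (Nat.eqb_spec x d).
  - subst. rewrite sumR_upd_notin; auto. pose proof (indb_bounds (negb (upd m d v d =? 0))).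
    pose proof (indb_bounds (negb (m d =? 0))). lra.
  - assert (upd m d v x = m x). { unfold upd. apply Nat.eqb_neq in n. rewrite n; auto. }
    rewrite H0. lra. Qed.

Lemma cnt_upd n m d v : cntR n (upd m d v) <= cntR n m + 1.
Proof. apply sumR_upd, seq_NoDup. Qed.

Lemma cnt_step P n c x : cntR n (mem c) <= INR (steps c) -> In x (step P c) ->
  cntR n (mem (snd x)) <= INR (steps (snd x)).
Proof. intros Hc Hx. unfold step in Hx. destruct (nth_error P (pc c)) as [i|].
  2:{ destruct Hx as [<-|[]]; auto. }
  destruct i; unfold exec in Hx;
  try (destruct Hx as [<-|[]]; cbn [snd mem steps wr]; rewrite S_INR;
       first [match goal with |- cntR n (upd _ ?d ?v) <= _ => pose proof (cnt_upd n (mem c) d v) end; lra | lra]).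
  apply in_map_iff in Hx. destruct Hx as [v [<- _]]. cbn [snd mem steps wr]; rewrite S_INR.
  pose proof (cnt_upd n (mem c) d v); lra. Qed.

Definition Ei (i : nat) (y : list nat) : bool := negb (nth (pred i) y 0%nat =? 0).

Lemma nth_output c k : nth k (output c) 0%nat = if k <? mem c 0 then mem c (S k) else 0%nat.
Proof. unfold output. destruct (Nat.ltb_spec k (mem c 0)).
  - transitivity (nth k (map (fun i => mem c (S i)) (seq 0 (mem c 0))) ((fun i => mem c (S i)) 0%nat)).
    + apply nth_indep. rewrite length_map, length_seq; auto.
    + pose proof (map_nth (fun i => mem c (S i)) (seq 0 (mem c 0)) 0%nat k) as Hm.
      cbv beta in Hm |- *. rewrite Hm, seq_nth; auto.
  - apply nth_overflow. rewrite length_map, length_seq; auto. Qed.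

Lemma GE_Ei_le P c i : (1 <= i)%nat -> GE P (Ei i) c <= indb (negb (mem c i =? 0)).
Proof. intros Hi. unfold GE, Ei. rewrite nth_output.
  destruct (pred i <? mem c 0); destruct (halted P c); simpl;
  try (replace (S (pred i)) with i by lia); try apply indb_bounds; simpl; lra. Qed.

Lemma sum_GE_cnt P n c : sumR (seq 1 n) (fun i => GE P (Ei i) c) <= cntR n (mem c).
Proof. apply sumR_le. intros i Hi. apply in_seq in Hi. apply GE_Ei_le; lia. Qed.

Definition env_of (x : list bool) : nat -> nat :=
  fun i => match i with O => length x | S i' => b2n (nth i' x false) end.

Lemma compat_env_of x : compatible x (env_of x).
Proof. split; auto. Qed.

Definition mism (L : list nat) (c : config) : bool :=
  existsb (fun i => negb (mem c i =? 0) && (i <=? mem c 0)) L.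

Lemma output_eq L c c' : Rel (sL L) c c' -> (forall i, In i L -> (1 <= i)%nat) ->
  mism L c' = false -> output c = output c'.
Proof. intros HR HL Hm. pose proof HR as [_ [_ Hmem]].
  assert (E0 : mem c 0 = mem c' 0).
  { destruct (Hmem 0%nat) as [|[Hs _]]; auto. apply sL_In, HL in Hs; lia. }
  unfold output. rewrite E0. apply map_ext_in. intros i Hi. apply in_seq in Hi.
  destruct (Hmem (S i)) as [|[Hs [H0 H1]]]; auto. exfalso.
  assert (existsb (fun i => negb (mem c' i =? 0) && (i <=? mem c' 0)) L = true).
  { apply existsb_exists. exists (S i). split; [apply sL_In; auto|]. rewrite H1.
    change (negb (1 =? 0)) with true. rewrite andb_true_l. apply Nat.leb_le; lia. }
  unfold mism in Hm; congruence. Qed.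

Lemma M_le_sum P L c : (forall i, In i L -> (1 <= i)%nat) ->
  indb (halted P c && mism L c) <= sumR L (fun i => GE P (Ei i) c).
Proof. intros HL. destruct (halted P c) eqn:Eh; destruct (mism L c) eqn:Em; simpl;
  try (apply sumR_nonneg; intros; apply indb_bounds).
  unfold mism in Em. apply existsb_exists in Em. destruct Em as [i [Hi Hc]].
  apply andb_true_iff in Hc as [H1 H2]. apply Nat.leb_le in H2.
  apply Rle_trans with (GE P (Ei i) c).
  - unfold GE, Ei. rewrite Eh, nth_output. specialize (HL i Hi).
    destruct (Nat.ltb_spec (pred i) (mem c 0)); [|lia].
    replace (S (pred i)) with i by lia. rewrite H1. simpl; lra.
  - apply (sumR_term L (fun i => GE P (Ei i) c)); auto. intros; apply indb_bounds. Qed.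

Lemma base_cond P L A c c' : Rel (sL L) c c' -> (forall i, In i L -> (1 <= i)%nat) ->
  GE P A c' <= GE P A c + indb (halted P c' && mism L c').
Proof. intros HR HL. pose proof HR as [Hp _].
  assert (Hh : halted P c = halted P c') by (unfold halted; rewrite Hp; auto).
  destruct (mism L c') eqn:Em.
  - pose proof (GE_bounds P A c). pose proof (GE_bounds P A c').
    destruct (halted P c') eqn:Eh'.
    + change (indb (true && true)) with 1. lra.
    + rewrite (GE_halted P A c' Eh'). change (indb (false && true)) with 0. lra.
  - rewrite andb_false_r. change (indb false) with 0. unfold GE. rewrite Hh, (output_eq L c c' HR HL Em). lra. Qed.

Definition Dset a j z := repeat false a ++ repeat true j ++ repeat false z.

Lemma nth_repeat_false m i : nth i (repeat false m) false = false.
Proof. revert i; induction m; intros [|i]; simpl; auto. Qed.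

Lemma nth_Dset_true a j z i : nth i (Dset a j z) false = true -> (a <= i < a + j)%nat.
Proof. unfold Dset. intros H. destruct (Nat.ltb_spec i a).
  - rewrite app_nth1 in H by (rewrite repeat_length; auto). rewrite nth_repeat_false in H; discriminate.
  - rewrite app_nth2 in H by (rewrite repeat_length; auto). rewrite repeat_length in H.
    destruct (Nat.ltb_spec (i - a) j).
    + lia.
    + rewrite app_nth2 in H by (rewrite repeat_length; auto).
      rewrite nth_repeat_false in H; discriminate. Qed.

Lemma Dset_length a j z : length (Dset a j z) = (a + j + z)%nat.
Proof. unfold Dset. rewrite !length_app, !repeat_length. lia. Qed.

Lemma Rel_init a j z :
  Rel (sL (seq (a+1) j)) (Config 0 (env_of (repeat false (a+j+z))) 0) (Config 0 (env_of (Dset a j z)) 0).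
Proof. split; [reflexivity|split; [reflexivity|]]. intros [|i]; simpl.
  - left. rewrite repeat_length, Dset_length; auto.
  - rewrite nth_repeat_false. destruct (nth i (Dset a j z) false) eqn:E; [right|left; reflexivity].
    apply nth_Dset_true in E. split; [apply sL_In, in_seq; lia|]. simpl; auto. Qed.

Lemma sum_repeat b m : fold_right (fun b acc => INR (b2n b) + acc) 0 (repeat b m) = INR m * INR (b2n b).
Proof. induction m; simpl repeat; cbn [fold_right]; [simpl; ring|]. rewrite IHm, S_INR; ring. Qed.

Lemma sum_app l1 l2 : fold_right (fun b acc => INR (b2n b) + acc) 0 (l1 ++ l2) =
  fold_right (fun b acc => INR (b2n b) + acc) 0 l1 + fold_right (fun b acc => INR (b2n b) + acc) 0 l2.
Proof. induction l1; simpl; [ring|]. rewrite IHl1; ring. Qed.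

Lemma mean_Dset a j z : mean (Dset a j z) = INR j / INR (a + j + z).
Proof. unfold mean. rewrite Dset_length. unfold Dset. rewrite !sum_app, !sum_repeat.
  unfold Rdiv; apply Rmult_eq_compat_r. simpl b2n. rewrite INR_0, INR_1. ring. Qed.

Lemma repeat_Sr {X} (x : X) n : repeat x (S n) = repeat x n ++ [x].
Proof. induction n; simpl; auto. rewrite <- IHn; reflexivity. Qed.

Lemma group P eps a : eps_DP eps P -> forall j z E,
  PrOut P (env_of (Dset a j z)) E <= (exp eps) ^ (2 * j) * PrOut P (env_of (Dset a 0 (j + z))) E.
Proof. intros HDP j. induction j; intros z E.
  - simpl. lra.
  - set (A := repeat false a ++ repeat true j).
    assert (H1 : Dset a (S j) z = A ++ true :: repeat false z).
    { unfold Dset, A. rewrite repeat_Sr, <- !app_assoc. reflexivity. }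
    assert (H2 : Dset a j z = A ++ repeat false z).
    { unfold Dset, A. rewrite <- app_assoc; reflexivity. }
    assert (H3 : Dset a j (S z) = A ++ false :: repeat false z).
    { unfold Dset, A. rewrite <- app_assoc; reflexivity. }
    assert (Ha : PrOut P (env_of (Dset a (S j) z)) E <= exp eps * PrOut P (env_of (Dset a j z)) E).
    { apply (HDP (Dset a (S j) z) (Dset a j z)); try apply compat_env_of. right. exists A, (repeat false z), true. right; split; auto. }
    assert (Hb : PrOut P (env_of (Dset a j z)) E <= exp eps * PrOut P (env_of (Dset a j (S z))) E).
    { apply (HDP (Dset a j z) (Dset a j (S z))); try apply compat_env_of. right. exists A, (repeat false z), false. left; split; auto. }
    specialize (IHj (S z) E). replace (j + S z)%nat with (S j + z)%nat in IHj by lia.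
    pose proof (exp_pos eps). pose proof (PrOut_nonneg P (env_of (Dset a j z)) E).
    replace (2 * S j)%nat with (2 * j + 2)%nat by lia. rewrite pow_add.
    apply Rle_trans with (exp eps * (exp eps * PrOut P (env_of (Dset a j (S z))) E)).
    + apply Rle_trans with (exp eps * PrOut P (env_of (Dset a j z)) E); auto.
      apply Rmult_le_compat_l; lra.
    + replace (exp eps ^ (2 * j) * exp eps ^ 2 * PrOut P (env_of (Dset a 0 (S j + z))) E)
        with (exp eps * (exp eps * (exp eps ^ (2 * j) * PrOut P (env_of (Dset a 0 (S j + z))) E))) by ring.
      apply Rmult_le_compat_l; [lra|]. apply Rmult_le_compat_l; [lra|]. auto. Qed.

Lemma Dset0 a z : Dset a 0 z = repeat false (a + z).
Proof. unfold Dset. simpl. rewrite repeat_app; auto. Qed.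

Lemma massn_init1 e : massn (fun _ => 1) (init e) = 1.
Proof. simpl; ring. Qed.

Definition touchi P i c := indb (existsb (Nat.eqb i) (rd P c)).

Lemma key P eps a j z T g C E :
  eps_DP eps P ->
  (forall x E', PrOut P (env_of x) E' <= PrOutBy P (env_of x) T E' + g) ->
  (exp eps) ^ (2 * j) <= C ->
  PrOutBy P (env_of (Dset a j z)) T E <=
    PrOutBy P (env_of (repeat false (a + j + z))) T E
    + sumR (seq (a+1) j) (fun i => sumK P (touchi P i) T (init (env_of (repeat false (a + j + z))))
                                   + C * PrOutBy P (env_of (repeat false (a + j + z))) T (Ei i))
    + INR j * (C * g).
Proof. intros HDP Htail HC.
  set (e0 := env_of (repeat false (a + j + z))). set (eD := env_of (Dset a j z)).
  set (L := seq (a+1) j).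
  assert (HL : forall i, In i L -> (1 <= i)%nat) by (intros i Hi; apply in_seq in Hi; lia).
  assert (Hc := coupling P (sL L) (GE P E) (GE P E) (fun c => indb (halted P c && mism L c))
     (GE_bounds P E) (fun c => proj1 (GE_bounds P E c)) (fun c => proj1 (indb_bounds _))
     (fun c c' HR => base_cond P L E c c' HR HL) T (init e0) (init eD)).
  assert (HF2 : Forall2 (RW (sL L)) (init e0) (init eD)).
  { constructor; [|constructor]. split; [reflexivity|]. apply Rel_init. }
  specialize (Hc HF2 (nonneg_init e0)). rewrite <- !PrOutBy_massn in Hc.
  assert (Ht : sumK P (fun c => indb (existsb (sL L) (rd P c))) T (init e0) <=
               sumR L (fun i => sumK P (touchi P i) T (init e0))).
  { rewrite <- sumK_sumR. apply sumK_le; [apply nonneg_init|]. intros c. apply touch_split. }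
  assert (Hm : massn (fun c => indb (halted P c && mism L c)) (run P T (init eD)) <=
               sumR L (fun i => PrOutBy P eD T (Ei i))).
  { apply Rle_trans with (massn (fun c => sumR L (fun i => GE P (Ei i) c)) (run P T (init eD))).
    - apply massn_le; [apply nonneg_run, nonneg_init|]. intros c; apply M_le_sum; auto.
    - rewrite massn_sumR. apply Req_le, sumR_eq_in. intros; rewrite PrOutBy_massn; auto. }
  assert (Hd : forall i, PrOutBy P eD T (Ei i) <= C * (PrOutBy P e0 T (Ei i) + g)).
  { intros i. apply Rle_trans with (PrOut P eD (Ei i)); [apply PrOutBy_le_PrOut|].
    apply Rle_trans with ((exp eps) ^ (2 * j) * PrOut P (env_of (Dset a 0 (j + z))) (Ei i)).
    - apply group; auto.
    - rewrite Dset0. replace (a + (j + z))%nat with (a + j + z)%nat by lia. fold e0.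
      pose proof (PrOut_nonneg P e0 (Ei i)). pose proof (Htail (repeat false (a + j + z)) (Ei i)).
      fold e0 in H0. pose proof (pow_le (exp eps) (2 * j) (Rlt_le _ _ (exp_pos eps))).
      apply Rle_trans with (C * PrOut P e0 (Ei i)).
      + apply Rmult_le_compat_r; lra.
      + apply Rmult_le_compat_l; lra. }
  assert (Hs : sumR L (fun i => PrOutBy P eD T (Ei i)) <=
               sumR L (fun i => C * PrOutBy P e0 T (Ei i)) + INR j * (C * g)).
  { apply Rle_trans with (sumR L (fun i => C * PrOutBy P e0 T (Ei i) + C * g)).
    - apply sumR_le; intros i _. specialize (Hd i). lra.
    - rewrite sumR_plus, sumR_const. unfold L; rewrite length_seq. lra. }
  rewrite sumR_plus. lra. Qed.

Lemma Rabs_le_inv x a : Rabs x <= a -> - a <= x <= a.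
Proof. intros H. pose proof (Rle_abs x). pose proof (Rle_abs (-x)). rewrite Rabs_Ropp in H1. lra. Qed.

Lemma Rleb_true a b : Rleb a b = true -> a <= b.
Proof. unfold Rleb; destruct (Rle_dec a b); auto; discriminate. Qed.

Lemma seq_blocks m K q : sumR (seq 1 (m * K)) q = sumR (seq 0 m) (fun b => sumR (seq (1 + b * K) K) q).
Proof. induction m.
  - reflexivity.
  - rewrite Nat.mul_succ_l, seq_app, sumR_app, IHm, seq_S, sumR_app. simpl. ring. Qed.

Lemma pigeon_gt m (X : nat -> R) t : (0 < m)%nat -> (forall b, (b < m)%nat -> t < X b) ->
  INR m * t < sumR (seq 0 m) X.
Proof. induction m; intros Hm HX; [lia|]. rewrite seq_S, sumR_app. simpl sumR. rewrite S_INR.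
  destruct m.
  - simpl. specialize (HX 0%nat ltac:(lia)). lra.
  - assert (INR (S m) * t < sumR (seq 0 (S m)) X) by (apply IHm; [lia| intros; apply HX; lia]).
    specialize (HX (S m) ltac:(lia)). simpl plus. lra. Qed.

Lemma pigeon m (X : nat -> R) t : (0 < m)%nat -> sumR (seq 0 m) X <= INR m * t ->
  exists b, (b < m)%nat /\ X b <= t.
Proof. intros Hm Hs. apply NNPP; intros Hn.
  assert (forall b, (b < m)%nat -> t < X b).
  { intros b Hb. destruct (Rlt_le_dec t (X b)); auto. exfalso; apply Hn; eauto. }
  pose proof (pigeon_gt m X t Hm H). lra. Qed.

Lemma cnt_init n : cntR n (env_of (repeat false n)) = 0.
Proof. unfold cntR. rewrite (sumR_eq_in _ _ (fun _ => 0)).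
  - rewrite sumR_const; ring.
  - intros i Hi. apply in_seq in Hi. destruct i; [lia|]. simpl env_of.
    rewrite nth_repeat_false. reflexivity. Qed.

Lemma sum_Ei_le P n T : sumR (seq 1 n) (fun i => PrOutBy P (env_of (repeat false n)) T (Ei i)) <= INR T.
Proof. rewrite (sumR_eq_in _ _ (fun i => massn (GE P (Ei i)) (run P T (init (env_of (repeat false n)))))).
  2:{ intros; apply PrOutBy_massn. }
  rewrite <- massn_sumR.
  apply Rle_trans with (massn (fun _ => INR T) (run P T (init (env_of (repeat false n))))).
  - apply massn_le_in; [apply nonneg_run, nonneg_init|]. intros wc Hwc.
    assert (Hc : List.Forall (fun wc => cntR n (mem (snd wc)) <= INR (steps (snd wc)))
                (run P T (init (env_of (repeat false n))))).
    { apply (run_pres P (fun c => cntR n (mem c) <= INR (steps c))). intros c x Hc Hx; eapply cnt_step; eauto.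
      constructor; [|constructor]. simpl. rewrite cnt_init. lra. }
    rewrite Forall_forall in Hc. specialize (Hc wc Hwc).
    pose proof (run_steps_inv P (env_of (repeat false n)) T) as Hs. rewrite Forall_forall in Hs.
    destruct (Hs wc Hwc) as [Hs1 _]. apply le_INR in Hs1.
    pose proof (sum_GE_cnt P n (snd wc)). lra.
  - rewrite (massn_eq_in (fun _ => INR T) (fun c => INR T * 1)) by (intros; ring).
    rewrite massn_scal, massn_total. simpl. lra. Qed.

Theorem mainTheorem11 (eps : R) (P : program) (dec : list nat -> R) :
  eps_DP eps P ->
  (forall x x' env env' t, compatible x env -> compatible x' env' ->
     PrTime P env t = PrTime P env' t) ->
  forall beta : R, 0 < beta < 1 ->
  exists (x : list bool) (alpha : R),
    (0 < length x)%nat /\ 0 < alpha /\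
    forall env, compatible x env ->
      1 - PrOut P env (fun y => Rleb (Rabs (dec y - mean x)) alpha) > beta.
Proof.
  intros HDP HT beta Hb. apply NNPP; intros Hn.
  assert (He : 0 < exp eps) by apply exp_pos.
  set (c0 := (1 - beta) / exp eps).
  assert (Hc0 : 0 < c0) by (unfold c0; apply Rdiv_lt_0_compat; lra).
  assert (Hacc : forall x al, (0 < length x)%nat -> 0 < al ->
     c0 <= PrOut P (env_of x) (fun y => Rleb (Rabs (dec y - mean x)) al)).
  { intros x al Hx Hal.
    set (acc := fun y => Rleb (Rabs (dec y - mean x)) al).
    destruct (classic (exists env, compatible x env /\ 1 - PrOut P env acc <= beta))
      as [[env [Hce Hle]]|Hno].
    - pose proof (HDP x x env (env_of x) (or_introl eq_refl) Hce (compat_env_of x) acc) as Hd.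
      unfold c0. replace (PrOut P (env_of x) acc) with ((exp eps * PrOut P (env_of x) acc) / exp eps)
        by (field; lra).
      unfold Rdiv. apply Rmult_le_compat_r; [left; apply Rinv_0_lt_compat; auto| lra].
    - exfalso; apply Hn. exists x, al. split; [|split]; auto. intros env Hce.
      destruct (Rlt_le_dec beta (1 - PrOut P env acc)); auto. exfalso; apply Hno; eauto. }
  destruct (INR_unbounded (2 / c0)) as [N HN].
  set (K := S N).
  assert (HK : 2 < INR K * c0).
  { unfold K. rewrite S_INR. apply Rmult_gt_compat_r with (r := c0) in HN; auto.
    unfold Rdiv in HN. rewrite Rmult_assoc, Rinv_l in HN by lra. lra. }
  set (C := (Rmax 1 (exp eps)) ^ (2 * K)).
  assert (HC1 : 1 <= C) by (apply pow_R1_Rle, Rmax_l).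
  assert (HCj : forall j, (j <= K)%nat -> exp eps ^ (2 * j) <= C).
  { intros j Hj. apply Rle_trans with (Rmax 1 (exp eps) ^ (2 * j)).
    - apply pow_incr. split; [lra|apply Rmax_r].
    - apply Rle_pow; [apply Rmax_l|lia]. }
  assert (HKpos : 0 <= INR K) by apply pos_INR.
  set (g := c0 / (4 * (1 + INR K * C))).
  assert (Hden : 0 < 4 * (1 + INR K * C)).
  { assert (0 <= INR K * C) by (apply Rmult_le_pos; lra). lra. }
  assert (Hg : 0 < g) by (unfold g; apply Rdiv_lt_0_compat; lra).
  assert (Hg4 : g * (1 + INR K * C) = c0 / 4) by (unfold g; field; lra).
  destruct (exists_T P (env_of []) g Hg) as [T HTg].
  assert (Htail : forall x E, PrOut P (env_of x) E <= PrOutBy P (env_of x) T E + g).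
  { intros x E. apply tail_bound. intros k.
    rewrite !(H_const P (env_of x) (env_of []) x [] _ HT (compat_env_of x) (compat_env_of [])). auto. }
  destruct (INR_unbounded (4 * ((2 + C) * INR T) / c0)) as [m0 Hm0].
  set (m := S m0).
  assert (Hm : 4 * ((2 + C) * INR T) < c0 * INR m).
  { unfold m. rewrite S_INR. apply Rmult_gt_compat_r with (r := c0) in Hm0; auto.
    unfold Rdiv in Hm0. rewrite Rmult_assoc, Rinv_l in Hm0 by lra. lra. }
  assert (Hmpos : 0 < INR m) by (apply lt_0_INR; unfold m; lia).
  set (n := (m * K)%nat).
  set (e0 := env_of (repeat false n)).
  set (q := fun i => sumK P (touchi P i) T (init e0) + C * PrOutBy P e0 T (Ei i)).
  assert (Hq0 : forall i, 0 <= q i).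
  { intros i. unfold q. pose proof (sumK_nonneg P (touchi P i) T (init e0) (nonneg_init e0)
       (fun c => proj1 (indb_bounds _))). pose proof (PrOutBy_bounds P e0 T (Ei i)). nra. }
  assert (Htot : sumR (seq 1 n) q <= (2 + C) * INR T).
  { unfold q. rewrite sumR_plus, sumR_scal.
    pose proof (touch_total P n T (init e0) (nonneg_init e0)) as Ht.
    rewrite massn_init1 in Ht.
    pose proof (sum_Ei_le P n T) as Hs. fold e0 in Hs.
    unfold touchi. nra. }
  unfold n in Htot. rewrite seq_blocks in Htot.
  destruct (pigeon m (fun b => sumR (seq (1 + b * K) K) q) ((2 + C) * INR T / INR m))
    as [b [Hbm HbX]]; [unfold m; lia| |].
  { replace (INR m * ((2 + C) * INR T / INR m)) with ((2 + C) * INR T) by (field; lra). auto. }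
  assert (HX : sumR (seq (1 + b * K) K) q <= c0 / 4).
  { apply Rle_trans with ((2 + C) * INR T / INR m); auto.
    apply Rmult_le_reg_r with (INR m); auto. unfold Rdiv. rewrite Rmult_assoc, Rinv_l by lra. lra. }
  set (a := (b * K)%nat).
  assert (HaK : (a + K <= n)%nat).
  { unfold a, n. replace (b * K + K)%nat with (S b * K)%nat by lia. apply Nat.mul_le_mono_r. lia. }
  set (r := (n - a - K)%nat).
  assert (Hnpos : 0 < INR n) by (apply lt_0_INR; unfold n, m, K; simpl; lia).
  set (al := / (4 * INR n)).
  assert (Hal : 0 < al) by (unfold al; apply Rinv_0_lt_compat; lra).
  set (acc := fun j y => Rleb (Rabs (dec y - INR j / INR n)) al).
  assert (Hj : forall j, (j <= K)%nat -> c0 / 2 <= PrOutBy P e0 T (acc j)).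
  { intros j HjK. set (z := (K - j + r)%nat).
    assert (Hn' : (a + j + z)%nat = n) by (unfold z, r; lia).
    pose proof (Hacc (Dset a j z) al) as h1.
    rewrite Dset_length, Hn', mean_Dset, Hn' in h1.
    specialize (h1 ltac:(unfold n, m, K; simpl; lia) Hal). fold (acc j) in h1.
    pose proof (Htail (Dset a j z) (acc j)) as h2.
    pose proof (key P eps a j z T g C (acc j) HDP Htail (HCj j HjK)) as h3.
    rewrite Hn' in h3. fold e0 in h3.
    assert (h4 : sumR (seq (a + 1) j) q <= sumR (seq (1 + b * K) K) q).
    { replace (1 + b * K)%nat with (a + 1)%nat by (unfold a; lia).
      replace (seq (a + 1) K) with (seq (a+1) (j + (K - j))) by (f_equal; lia). rewrite seq_app, sumR_app.
      pose proof (sumR_nonneg (seq (a + 1 + j) (K - j)) q Hq0). lra. }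
    assert (h5 : INR j * (C * g) <= INR K * C * g).
    { apply le_INR in HjK. assert (0 <= C * g) by (apply Rmult_le_pos; lra). replace (INR K * C * g) with (INR K * (C * g)) by ring. apply Rmult_le_compat_r; lra. }
    unfold q in h4, HX. assert (Hg5 : g + INR K * C * g = c0 / 4) by (rewrite <- Hg4; ring). lra. }
  assert (Hlow : INR (S K) * (c0 / 2) <= sumR (seq 0 (S K)) (fun j => PrOutBy P e0 T (acc j))).
  { rewrite <- (length_seq (S K) 0) at 1. rewrite <- sumR_const. apply sumR_le.
    intros j Hjj. apply in_seq in Hjj. apply Hj; lia. }
  assert (Hup : sumR (seq 0 (S K)) (fun j => PrOutBy P e0 T (acc j)) <= 1).
  { rewrite (sumR_eq_in _ _ (fun j => massn (GE P (acc j)) (run P T (init e0)))).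
    2:{ intros; apply PrOutBy_massn. }
    rewrite <- massn_sumR.
    apply Rle_trans with (massn (fun _ => 1) (run P T (init e0))).
    - apply massn_le; [apply nonneg_run, nonneg_init|]. intros c.
      apply (sumR_excl (seq 0 (S K)) (fun j => halted P c && acc j (output c))); [apply seq_NoDup|].
      intros i j _ _ Hij Hi. apply andb_true_iff in Hi as [Hh Hi].
      destruct (acc j (output c)) eqn:Ej; [|rewrite andb_false_r; auto]. exfalso.
      unfold acc in Hi, Ej. apply Rleb_true, Rabs_le_inv in Hi. apply Rleb_true, Rabs_le_inv in Ej.
      set (u := / INR n) in *.
      assert (Hu : 0 < u) by (unfold u; apply Rinv_0_lt_compat; lra).
      assert (Hal' : al = u / 4) by (unfold al, u; field; lra).
      unfold Rdiv in Hi, Ej. fold u in Hi, Ej. rewrite Hal' in Hi, Ej.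
      assert (Hij' : (i >= S j \/ j >= S i)%nat) by lia.
      destruct Hij' as [Hij'|Hij']; apply le_INR in Hij'; rewrite S_INR in Hij'; nra.
    - rewrite massn_total. simpl; lra. }
  rewrite S_INR in Hlow. nra.
Qed.
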